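(* Let $I\subseteq\mathbb{R}$ be an interval, let $f:I\to\mathbb{R}$ be differentiable on the interior $I^\circ$ of $I$, and let $a,b\in I$ with $a<b$ and $f'\in L^1[a,b]$. Let $s\in(0,1]$, $\alpha\in[0,1]$, $m\in(0,1]$, assume $b/m\in I^\circ$, and let $p>1$ and $q=\frac{p}{p-1}$. If $|f'|^q$ is $s$-$(\alpha,m)$-convex (in the first sense) on $[a,b]$, then $$\left|\frac{f(a)+f(b)}{2}-\frac{1}{b-a}\int_a^b f(x)\,dx\right|\le \frac{b-a}{2(p+1)^{1/p}}\left[\frac{|f'(a)|^q+m\alpha s\left|f'\!\left(\frac{b}{m}\right)\right|^q}{\alpha s+1}\right]^{1/q}.$$
   Context: Let $s\in(0,1]$, $\alpha\in[0,1]$, $m\in(0,1]$. A nonnegative function $g$ is called $s$-$(\alpha,m)$-convex (in the first sense) on $[a,b]$ if for all $x,y\in[a,b]$ (with $y/m$ in the domain of $g$) and all $t\in[0,1]$, $$g(tx+(1-t)y)\le t^{\alpha s}g(x)+m\,(1-t^{\alpha s})\,g\!\left(\frac{y}{m}\right).$$ *)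

(* Defs.v *)
From HB Require Import structures.
From mathcomp Require Import all_boot all_order all_algebra.
From mathcomp Require Import all_classical all_reals all_analysis.
Set Implicit Arguments. Unset Strict Implicit. Unset Printing Implicit Defensive.
Import Order.TTheory GRing.Theory Num.Theory.
Import numFieldNormedType.Exports.
Local Open Scope classical_set_scope.
Local Open Scope ring_scope.

Definition s_alpha_m_convex (R : realType) (s alpha m : R) (D : set R)
    (g : R -> R) (a b : R) : Prop :=
  (forall x, D x -> 0 <= g x) /\
  (forall x y t : R, a <= x <= b -> a <= y <= b -> D (y / m) -> 0 <= t <= 1 ->
     g (t * x + (1 - t) * y)
       <= t `^ (alpha * s) * g x + m * (1 - t `^ (alpha * s)) * g (y / m)).

(* Main.v *)
Require Import Defs.
From HB Require Import structures.
From mathcomp Require Import all_boot all_order all_algebra.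
From mathcomp Require Import all_classical all_reals all_analysis.
From mathcomp Require Import ring lra.
Import Order.TTheory GRing.Theory Num.Theory.
Import numFieldNormedType.Exports.
Local Open Scope classical_set_scope.
Local Open Scope ring_scope.

Section helpers.
Context {R : realType}.

Lemma is_derive_affine (h : R -> R) (u v x dh : R) :
  is_derive (u * x + v) 1 h dh -> is_derive x 1 (fun y => h (u * y + v)) (u * dh).
Proof.
move=> hd.
have dl : forall y : R, is_derive y (1:R) (fun y : R => u * y + v) u.
  move=> y; have hh := (is_deriveD (is_deriveZ u (is_derive_id y (1:R))) (is_derive_cst v y (1:R))).
  apply: (is_derive_eq hh); rewrite addr0; exact: mulr1.
have dg : derivable h (u * x + v) 1 by case: hd.
have df : derivable (fun y : R => u * y + v) x 1 by case: (dl x).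
split.
  apply/derivable1_diffP; apply: differentiable_comp; exact/derivable1_diffP.
have := derive1_comp df dg.
rewrite /comp !derive1E => ->.
rewrite (@derive_val _ _ _ _ _ _ _ hd).
by rewrite (@derive_val _ _ _ _ _ _ _ (dl x)) mulrC.
Qed.


Definition pw (e y : R) : R := (Num.max y 0) `^ e.

Lemma pw_ge0 e y : 0 <= y -> pw e y = y `^ e.
Proof. by move=> y0; rewrite /pw max_l. Qed.

Lemma pw_le0 e y : 0 < e -> y <= 0 -> pw e y = 0.
Proof. by move=> e0 y0; rewrite /pw max_r // powR0 // gt_eqF. Qed.

Lemma pw_cont e : 0 < e -> continuous (pw e).
Proof.
move=> e0 y.
have [y0|y0] := ltP 0 y.
  have cm : {for y, continuous (fun z : R => Num.max z 0)}.
    have := @continuous_max _ _ id (cst 0) y.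
    by apply; [exact: cvg_id | exact: cst_continuous].
  have cp : {for (Num.max y 0 : R), continuous (fun z : R => z `^ e)}.
    have hd : derivable (fun z : R => z `^ e) (Num.max y 0) 1.
      by apply: (@derivable_powR R 1 e (Num.max y 0)); rewrite /= in_itv /= andbT max_l ?ltW.
    exact/differentiable_continuous/derivable1_diffP.
  exact: (continuous_comp cm cp).
apply/cvgrPdist_lt => eps eps0.
rewrite pw_le0 //.
pose d := (eps / 2) `^ e^-1.
have d0 : 0 < d by rewrite powR_gt0 // divr_gt0.
have := @near_ball _ _ y d d0.
apply: filterS => z; rewrite /ball /= => hz.
rewrite sub0r normrN /pw ger0_norm ?powR_ge0 //.
have hm : Num.max z 0 <= d.
  rewrite ge_max (ltW d0) andbT.
  have := ler_norm (z - y); rewrite distrC in hz; lra.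
apply: (le_lt_trans (ge0_ler_powR (ltW e0) _ _ hm)).
- by rewrite nnegrE le_max lexx orbT.
- by rewrite nnegrE ltW.
rewrite /d -powRrM mulVf ?gt_eqF // powRr1 ?divr_ge0 ?ltW //.
by rewrite ltr_pdivrMr // ltr_pMr // ltr1n.
Qed.


Lemma pw_derive (e y : R) : 0 < y -> is_derive y (1:R) (pw e) (e * y `^ (e - 1)).
Proof.
move=> y0; apply: (near_eq_is_derive _ (is_derive1_powR e y0)).
near=> z; rewrite pw_ge0 //; apply: ltW; near: z; exact: lt_nbhsr.
Unshelve. all: by end_near. Qed.

Lemma cont_pwa (e u v : R) : 0 < e -> continuous (fun x : R => pw e (u * x + v)).
Proof.
move=> e0 x.
have ca : {for x, continuous (fun y : R => u * y + v)}.
  apply: differentiable_continuous; apply/derivable1_diffP.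
  have dl : is_derive x (1:R) (fun y : R => u * y + v) u.
    have hh := (is_deriveD (is_deriveZ u (is_derive_id x (1:R))) (is_derive_cst v x (1:R))).
    apply: (is_derive_eq hh); rewrite addr0; exact: mulr1.
  by case: dl.
have cp : {for (u * x + v), continuous (pw e)} by exact: pw_cont.
have := @continuous_comp _ _ _ (fun y : R => u * y + v) (pw e) x ca cp.
exact.
Qed.

Lemma KK (e1 u1 v1 e2 u2 v2 al1 al2 be : R) : 0 < e1 -> 0 < e2 ->
  (continuous (fun x : R => al1 * pw e1 (u1 * x + v1) + al2 * pw e2 (u2 * x + v2) + be * x)) /\
  (forall x : R, 0 < u1 * x + v1 -> 0 < u2 * x + v2 ->
    is_derive x (1:R) (fun x : R => al1 * pw e1 (u1 * x + v1) + al2 * pw e2 (u2 * x + v2) + be * x)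
      (al1 * (u1 * (e1 * (u1 * x + v1) `^ (e1 - 1))) +
       al2 * (u2 * (e2 * (u2 * x + v2) `^ (e2 - 1))) + be)).
Proof.
move=> e10 e20; split.
  move=> x.
  have c1 := @cont_pwa e1 u1 v1 e10 x.
  have c2 := @cont_pwa e2 u2 v2 e20 x.
  have cid : {for x, continuous (fun y : R => y)} by exact: cvg_id.
  have := @continuousD _ _ _ (fun x => al1 * pw e1 (u1 * x + v1) + al2 * pw e2 (u2 * x + v2))
     (fun x => be * x) x.
  apply.
    have := @continuousD _ _ _ (fun x => al1 * pw e1 (u1 * x + v1)) (fun x => al2 * pw e2 (u2 * x + v2)) x.
    apply; [have := continuousZl_tmp (k:=al1) c1 | have := continuousZl_tmp (k:=al2) c2]; exact.
  have := continuousZl_tmp (k:=be) cid; exact.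
move=> x h1 h2.
have d1 := @is_derive_affine (pw e1) u1 v1 x _ (@pw_derive e1 _ h1).
have d2 := @is_derive_affine (pw e2) u2 v2 x _ (@pw_derive e2 _ h2).
have hh := is_deriveD (is_deriveD (is_deriveZ al1 d1) (is_deriveZ al2 d2))
  (is_deriveZ be (is_derive_id x (1:R))).
apply: (is_derive_eq hh).
by rewrite /GRing.scale /= mulr1.
Qed.

Lemma piece (f df F K k : R -> R) (u v c : R) : u < v ->
  (forall x : R, x \in `]u, v[ -> is_derive x (1:R) f (df x)) ->
  (forall x : R, x \in `]u, v[ -> is_derive x (1:R) F (f x)) ->
  (forall x : R, x \in `]u, v[ -> is_derive x (1:R) K (k x)) ->
  {within `[u, v], continuous f} ->
  {within `[u, v], continuous F} ->
  {within `[u, v], continuous K} ->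
  (forall x : R, x \in `]u, v[ -> `|(x - c) * df x| <= k x) ->
  `|((v - c) * f v - F v) - ((u - c) * f u - F u)| <= K v - K u.
Proof.
move=> uv hf hF hK cf cF cK bd.
have hl : forall x : R, is_derive x (1:R) (fun y : R => y - c) 1.
  move=> x; have hh := is_deriveB (is_derive_id x (1:R)) (is_derive_cst c x (1:R)).
  by apply: (is_derive_eq hh); rewrite subr0.
have cl : {within `[u, v], continuous (fun y : R => y - c)}.
  apply: continuous_subspaceT => x.
  have := @continuousB _ _ _ id (cst c) x.
  by apply; [exact: cvg_id | exact: cst_continuous].
have cM : {within `[u, v], continuous ((fun y : R => y - c) \* f)}.
  by move=> x; apply: continuousM; [exact: cl | exact: cf].
have der : forall s : R, forall x : R, x \in `]u, v[ ->
    is_derive x (1:R) ((fun y : R => y - c) \* f - F - s \*: K)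
      ((x - c) * df x - s * k x).
  move=> s x xuv.
  have hh := is_deriveB (is_deriveB (is_deriveM (hl x) (hf x xuv)) (hF x xuv))
    (is_deriveZ s (hK x xuv)).
  apply: (is_derive_eq hh).
  rewrite /GRing.scale /=; ring.
have cont : forall s : R,
    {within `[u, v], continuous ((fun y : R => y - c) \* f - F - s \*: K)}.
  move=> s x; apply: continuousB; first by apply: continuousB; [exact: cM|exact: cF].
  by apply: continuousZl_tmp; exact: cK.
have dv : forall s : R, forall x : R, x \in `]u, v[ ->
    derivable ((fun y : R => y - c) \* f - F - s \*: K) x 1.
  by move=> s x xuv; case: (der s x xuv).
have dd : forall s : R, forall x : R, x \in `]u, v[ ->
    derive1 ((fun y : R => y - c) \* f - F - s \*: K) x = (x - c) * df x - s * k x.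
  by move=> s x xuv; rewrite derive1E; apply: (@derive_val _ _ _ _ _ _ _ (der s x xuv)).
have s1 : forall x : R, x \in `]u, v[ ->
    derive1 ((fun y : R => y - c) \* f - F - 1 \*: K) x <= 0.
  move=> x xuv; rewrite dd //; have := bd x xuv.
  have := ler_norm ((x - c) * df x); lra.
have s2 : forall x : R, x \in `]u, v[ ->
    0 <= derive1 ((fun y : R => y - c) \* f - F - (-1) \*: K) x.
  move=> x xuv; rewrite dd //; have := bd x xuv.
  have := ler_norm (- ((x - c) * df x)); rewrite normrN; lra.
have up := @ler0_derive1_nincr R _ u v (dv 1) s1 (cont 1)
  u v (lexx _) (ltW uv) (lexx _).
have lo := @ger0_derive1_ndecr R _ u v (dv (-1)) s2 (cont (-1))
  u v (lexx _) (ltW uv) (lexx _).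
have up' : (v - c) * f v - F v - 1 * K v <= (u - c) * f u - F u - 1 * K u := up.
have lo' : (u - c) * f u - F u - (-1) * K u <= (v - c) * f v - F v - (-1) * K v := lo.
rewrite ler_norml; apply/andP; split; lra.
Qed.

Lemma core (f df K1 K2 k1 k2 : R -> R) (a b : R) : a < b ->
  (forall x : R, x \in `]a, b[ -> is_derive x (1:R) f (df x)) ->
  {within `[a, b], continuous f} ->
  (forall x : R, x \in `]a, (a + b) / 2[ -> is_derive x (1:R) K1 (k1 x)) ->
  {within `[a, (a + b) / 2], continuous K1} ->
  (forall x : R, x \in `](a + b) / 2, b[ -> is_derive x (1:R) K2 (k2 x)) ->
  {within `[(a + b) / 2, b], continuous K2} ->
  (forall x : R, x \in `]a, (a + b) / 2[ -> `|(x - (a + b) / 2) * df x| <= k1 x) ->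
  (forall x : R, x \in `](a + b) / 2, b[ -> `|(x - (a + b) / 2) * df x| <= k2 x) ->
  `|(b - a) / 2 * (f a + f b) - \int[lebesgue_measure]_(x in `[a, b]) f x|
    <= K1 ((a + b) / 2) - K1 a + (K2 b - K2 ((a + b) / 2)).
Proof.
move=> ab hf cf hK1 cK1 hK2 cK2 b1 b2.
set c := (a + b) / 2.
have ac : a < c by rewrite /c; lra.
have cb : c < b by rewrite /c; lra.
have intf : lebesgue_measure.-integrable `[a, b] (EFin \o f).
  exact: continuous_compact_integrable (@segment_compact _ a b) cf.
pose F := fun x => \int[lebesgue_measure]_(t in `[a, x]) f t.
have hF : forall x : R, x \in `]a, b[ -> is_derive x (1:R) F (f x).
  move=> x xab.
  have fx : {for x, continuous f}.
    by apply/differentiable_continuous/derivable1_diffP; case: (hf x xab).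
  have ax : (BLeft a < BRight x)%E by rewrite /Order.lt /= (itvP xab).
  have xb : x < b by rewrite (itvP xab).
  have [d1 d2] := @continuous_FTC1 R f (BLeft a) x b xb intf ax fx.
  by apply: DeriveDef => //; rewrite -derive1E.
have cF : {within `[a, b], continuous F}.
  exact: parameterized_integral_continuous (ltW ab) intf.
have sub1 : `[a, c] `<=` `[a, b].
  by move=> y; rewrite /= !in_itv /= => /andP[? ?]; apply/andP; split; lra.
have sub2 : `[c, b] `<=` `[a, b].
  by move=> y; rewrite /= !in_itv /= => /andP[? ?]; apply/andP; split; lra.
have in1 : forall x : R, x \in `]a, c[ -> x \in `]a, b[.
  by move=> y; rewrite !in_itv /= => /andP[? ?]; apply/andP; split; lra.
have in2 : forall x : R, x \in `]c, b[ -> x \in `]a, b[.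
  by move=> y; rewrite !in_itv /= => /andP[? ?]; apply/andP; split; lra.
have p1 := @piece f df F K1 k1 a c c ac (fun x h => hf x (in1 x h))
  (fun x h => hF x (in1 x h)) hK1 (continuous_subspaceW sub1 cf)
  (continuous_subspaceW sub1 cF) cK1 b1.
have p2 := @piece f df F K2 k2 c b c cb (fun x h => hf x (in2 x h))
  (fun x h => hF x (in2 x h)) hK2 (continuous_subspaceW sub2 cf)
  (continuous_subspaceW sub2 cF) cK2 b2.
have Fa : F a = 0 by rewrite /F set_itv1 Rintegral_set1.
have Fb : F b = \int[lebesgue_measure]_(x in `[a, b]) f x by [].
rewrite -Fb.
have e : (b - a) / 2 * (f a + f b) - F b =
  (((b - c) * f b - F b) - ((c - c) * f c - F c)) +
  (((c - c) * f c - F c) - ((a - c) * f a - F a)).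
  by rewrite Fa /c; field.
rewrite e; apply: (le_trans (ler_normD _ _)); lra.
Qed.

Lemma root_div (y Y e : R) : 0 <= y -> 0 < Y -> 0 < e ->
  (y / Y `^ e^-1) `^ e = y `^ e / Y.
Proof.
move=> y0 Y0 e0.
rewrite powRM //; last by rewrite invr_ge0 powR_ge0.
congr (_ * _).
by rewrite -powRN -powRrM mulNr mulVf ?gt_eqF // powR_inv1 // ltW.
Qed.

End helpers.

Theorem theorem2 (R : realType) (I : set R) (f : R -> R) (a b s alpha m p q : R) :
  is_interval I ->
  (forall x, interior I x -> derivable f x 1) ->
  interior I a -> interior I b -> a < b ->
  (@lebesgue_measure R).-integrable `[a, b] (EFin \o (derive1 f)) ->
  0 < s <= 1 -> 0 <= alpha <= 1 -> 0 < m <= 1 ->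
  interior I (b / m) ->
  1 < p -> q = p / (p - 1) ->
  s_alpha_m_convex s alpha m (interior I) (fun x => `|(derive1 f) x| `^ q) a b ->
  `| (f a + f b) / 2 - (b - a)^-1 * \int[@lebesgue_measure R]_(x in `[a, b]) f x |
    <= (b - a) / (2 * (p + 1) `^ p^-1) *
       ((`|(derive1 f) a| `^ q + m * alpha * s * `|(derive1 f) (b / m)| `^ q) / (alpha * s + 1))
         `^ q^-1.
Proof.
move=> hI hder Ia Ib ab _ hs; move: hs => /andP[s0 s1] /andP[al0 al1] /andP[m0 m1] Ibm p1 hq [gnn hconv].
have L0 : 0 < b - a by lra.
have p0 : 0 < p by lra.
have q0 : 0 < q by rewrite hq divr_gt0 //; lra.
have pq : p^-1 + q^-1 = 1.
  by rewrite hq invf_div; field; exact: lt0r_neq0.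
have r0 : 0 <= alpha * s by rewrite mulr_ge0 // ltW.
set A := `|(derive1 f) a| `^ q.
set B := `|(derive1 f) (b / m)| `^ q.
have A0 : 0 <= A by apply: powR_ge0.
have B0 : 0 <= B by apply: powR_ge0.
have inI : forall x, a <= x <= b -> interior I x.
  move=> x /andP[ax xb].
  have [->|ax'] := eqVneq x a; first by [].
  have [->|xb'] := eqVneq x b; first by [].
  have ax2 : a < x by rewrite lt_def ax' ax.
  have xb2 : x < b by rewrite lt_def eq_sym xb' xb.
  rewrite /interior /=.
  near=> z.
  apply: (hI a b (interior_subset Ia) (interior_subset Ib)).
  apply/andP; split; apply: ltW; near: z; [exact: lt_nbhsr | exact: lt_nbhsl].
have hfd : forall x : R, x \in `]a, b[ -> is_derive x (1:R) f (derive1 f x).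
  move=> x xab; rewrite derive1E; apply: derivableP; apply: hder; apply: inI.
  by move: xab; rewrite in_itv /= => /andP[h1 h2]; apply/andP; split; apply: ltW.
have cf : {within `[a, b], continuous f}.
  apply: continuous_in_subspaceT => x; rewrite inE /= in_itv /= => hx.
  by apply/differentiable_continuous/derivable1_diffP; apply: hder; apply: inI.
set L := b - a.
have LE : L = b - a by [].
clearbody L.
rewrite -LE in L0.
have gG : forall x, a <= x <= b ->
    `|derive1 f x| `^ q <= m * B + (A - m * B) * ((- L^-1) * x + b / L) `^ (alpha * s).
  move=> x hx.
  set t := (- L^-1) * x + b / L.
  have te : t = (b - x) / L.
    by rewrite /t; field; exact: (lt0r_neq0 L0).
  have t01 : 0 <= t <= 1.
    move: hx => /andP[h1 h2].
    rewrite te; apply/andP; split; first by apply: divr_ge0; [rewrite subr_ge0 | apply: ltW].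
    by rewrite ler_pdivrMr // mul1r LE lerD2l lerN2.
  have aab : a <= a <= b by apply/andP; split; lra.
  have bab : a <= b <= b by apply/andP; split; lra.
  have := hconv a b t aab bab Ibm t01.
  have -> : t * a + (1 - t) * b = x.
    by rewrite te LE; field; rewrite -LE; exact: (lt0r_neq0 L0).
  move=> h; apply: (le_trans h).
  by rewrite -/A -/B le_eqVlt; apply/orP; left; apply/eqP; ring.
clearbody A B.
have fin : forall X, `|(b - a) / 2 * (f a + f b) - \int[lebesgue_measure]_(x in `[a, b]) f x| <= X ->
    `|(f a + f b) / 2 - L^-1 * \int[lebesgue_measure]_(x in `[a, b]) f x| <= X / L.
  move=> X hX.
  have -> : (f a + f b) / 2 - L^-1 * \int[lebesgue_measure]_(x in `[a, b]) f x =
    ((b - a) / 2 * (f a + f b) - \int[lebesgue_measure]_(x in `[a, b]) f x) / L.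
    by rewrite LE; field; rewrite -LE; exact: (lt0r_neq0 L0).
  by rewrite normrM normfV (gtr0_norm L0) ler_wpM2r // invr_ge0 ltW.
pose M := (A + m * alpha * s * B) / (alpha * s + 1).
have ME : M = (A + m * alpha * s * B) / (alpha * s + 1) by [].
clearbody M.
have M0 : 0 <= M.
  rewrite ME.
  apply: divr_ge0; last by apply: addr_ge0.
  exact: (addr_ge0 A0 (mulr_ge0 (mulr_ge0 (mulr_ge0 (ltW m0) al0) (ltW s0)) B0)).
have r10 : 0 < alpha * s + 1 by apply: ltr_wpDl.
have [Mz|Mpos] := eqVneq M 0.
  rewrite -ME Mz.
  rewrite powR0 ?invr_eq0 ?(lt0r_neq0 q0) // mulr0.
  have Sz : A + m * alpha * s * B = 0.
    move/eqP: Mz; rewrite ME mulf_eq0 invr_eq0 (gt_eqF r10) orbF.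
    by move/eqP.
  have mB0 : 0 <= m * alpha * s * B.
    exact: (mulr_ge0 (mulr_ge0 (mulr_ge0 (ltW m0) al0) (ltW s0)) B0).
  have Az : A = 0 by apply/eqP; move/eqP: Sz; rewrite paddr_eq0 // => /andP[].
  have mBz : m * alpha * s * B = 0 by apply/eqP; move/eqP: Sz; rewrite paddr_eq0 // => /andP[].
  have d0 : forall x : R, x \in `]a, b[ -> derive1 f x = 0.
    move=> x xab.
    have hx : a <= x <= b.
      by move: xab; rewrite in_itv /= => /andP[h1 h2]; apply/andP; split; apply: ltW.
    have Gz : m * B + (A - m * B) * ((- L^-1) * x + b / L) `^ (alpha * s) = 0.
      have [rz|rnz] := eqVneq (alpha * s) 0.
        by rewrite rz powRr0 Az; ring.
      have Bz : B = 0.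
        move/eqP: mBz; rewrite -mulrA -mulrA mulf_eq0 (gt_eqF m0) /=.
        by rewrite mulrA mulf_eq0 (negbTE rnz) /= => /eqP.
      by rewrite Az Bz; ring.
    have := gG x hx; rewrite Gz => hle.
    have : `|derive1 f x| `^ q = 0 by apply/eqP; rewrite eq_le hle powR_ge0.
    by move/powR_eq0_eq0/normr0_eq0.
  have hc : forall x : R, is_derive x (1:R) (cst (0:R)) (cst (0:R) x).
    by move=> x; exact: is_derive_cst.
  have cc : forall D : set R, {within D, continuous (cst (0:R))}.
    by move=> D; apply: continuous_subspaceT; exact: cst_continuous.
  have bz : forall u v : R, forall x : R, x \in `]u, v[ -> `]u, v[ `<=` `]a, b[ ->
      `|(x - (a + b) / 2) * derive1 f x| <= cst (0:R) x.
    move=> u v x xuv sub; rewrite d0 ?mulr0 ?normr0 //.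
    exact: sub.
  have sb1 : `]a, (a + b) / 2[ `<=` `]a, b[.
    move=> y; rewrite /= !in_itv /= => /andP[h1 h2]; apply/andP; split => //; lra.
  have sb2 : `](a + b) / 2, b[ `<=` `]a, b[.
    move=> y; rewrite /= !in_itv /= => /andP[h1 h2]; apply/andP; split => //; lra.
  have := @core R f (derive1 f) (cst 0) (cst 0) (cst 0) (cst 0) a b ab hfd cf
    (fun x _ => hc x) (cc _) (fun x _ => hc x) (cc _)
    (fun x h => bz _ _ x h sb1) (fun x h => bz _ _ x h sb2).
  rewrite /= subrr addr0 => /fin.
  by rewrite mul0r.
have Mp : 0 < M by rewrite lt_def Mpos M0.
pose Q := L * M.
have QE : Q = L * M by [].
clearbody Q.
have Q0 : 0 < Q by rewrite QE mulr_gt0.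
pose P := (L / 2) `^ p * (L / (p + 1)).
have PE : P = (L / 2) `^ p * (L / (p + 1)) by [].
clearbody P.
have L20 : 0 < L / 2 by rewrite divr_gt0.
have P0 : 0 < P by rewrite PE mulr_gt0 ?powR_gt0 // divr_gt0 // addr_gt0.
pose U := P `^ p^-1.
have UE : U = P `^ p^-1 by [].
clearbody U.
pose V := Q `^ q^-1.
have VE : V = Q `^ q^-1 by [].
clearbody V.
have U0 : 0 < U by rewrite UE powR_gt0.
have V0 : 0 < V by rewrite VE powR_gt0.
pose C := U * V.
have CE : C = U * V by [].
clearbody C.
have C0 : 0 < C by rewrite CE mulr_gt0.
pose c := (a + b) / 2.
have cE : c = (a + b) / 2 by [].
clearbody c.
have young : forall x, a <= x <= b ->
    `|(x - c) * derive1 f x| <= C / (p * P) * `|x - c| `^ p +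
      C / (q * Q) * (m * B + (A - m * B) * ((- L^-1) * x + b / L) `^ (alpha * s)).
  move=> x hx.
  have Gb := gG x hx.
  rewrite normrM.
  move: (normr_ge0 (x - c)) (normr_ge0 (derive1 f x)) Gb.
  move: `|x - c| `|derive1 f x| => u w u0 w0 Gb.
  have Y := conjugate_powR (divr_ge0 u0 (ltW U0)) (divr_ge0 w0 (ltW V0)) p0 q0 pq.
  rewrite UE VE !root_div // -UE -VE in Y.
  have -> : u * w = C * (u / U * (w / V)).
    by rewrite CE; field; apply/andP; split; exact: lt0r_neq0.
  apply: (le_trans (ler_wpM2l (ltW C0) Y)).
  rewrite mulrDr; apply: lerD.
    rewrite le_eqVlt; apply/orP; left; apply/eqP.
    by field; rewrite (lt0r_neq0 P0) (lt0r_neq0 p0).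
  have -> : C / (q * Q) * (m * B + (A - m * B) * ((- L^-1) * x + b / L) `^ (alpha * s)) =
    C * ((m * B + (A - m * B) * ((- L^-1) * x + b / L) `^ (alpha * s)) / Q / q).
    by field; rewrite (lt0r_neq0 Q0) (lt0r_neq0 q0).
  apply: ler_wpM2l; first exact: ltW.
  apply: ler_wpM2r; first by rewrite invr_ge0 ltW.
  apply: ler_wpM2r; first by rewrite invr_ge0 ltW.
  exact: Gb.
pose w1 := C / (p * P) / (p + 1).
have w1E : w1 = C / (p * P) / (p + 1) by [].
clearbody w1.
pose w2 := - (C / (q * Q) * (A - m * B) * L / (alpha * s + 1)).
have w2E : w2 = - (C / (q * Q) * (A - m * B) * L / (alpha * s + 1)) by [].
clearbody w2.
pose be := C / (q * Q) * (m * B).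
have beE : be = C / (q * Q) * (m * B) by [].
clearbody be.
have pp0 : 0 < p + 1 by apply: addr_gt0.
have [cK1 dK1] := @KK R (p + 1) (-1) c (alpha * s + 1) (- L^-1) (b / L) (- w1) w2 be pp0 r10.
have [cK2 dK2] := @KK R (p + 1) 1 (- c) (alpha * s + 1) (- L^-1) (b / L) w1 w2 be pp0 r10.
have tpos : forall x, x < b -> 0 < (- L^-1) * x + b / L.
  move=> x xb.
  have -> : (- L^-1) * x + b / L = (b - x) / L by field; exact: (lt0r_neq0 L0).
  by rewrite divr_gt0 // subr_gt0.
have ac : a < c by rewrite cE; lra.
have cb : c < b by rewrite cE; lra.
pose K1 := fun x : R => - w1 * pw (p + 1) (-1 * x + c) +
  w2 * pw (alpha * s + 1) (- L^-1 * x + b / L) + be * x.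
pose k1 := fun x : R => - w1 * (-1 * ((p + 1) * (-1 * x + c) `^ (p + 1 - 1))) +
  w2 * (- L^-1 * ((alpha * s + 1) * (- L^-1 * x + b / L) `^ (alpha * s + 1 - 1))) + be.
pose K2 := fun x : R => w1 * pw (p + 1) (1 * x + - c) +
  w2 * pw (alpha * s + 1) (- L^-1 * x + b / L) + be * x.
pose k2 := fun x : R => w1 * (1 * ((p + 1) * (1 * x + - c) `^ (p + 1 - 1))) +
  w2 * (- L^-1 * ((alpha * s + 1) * (- L^-1 * x + b / L) `^ (alpha * s + 1 - 1))) + be.
have hK1 : forall x : R, x \in `]a, (a + b) / 2[ -> is_derive x (1:R) K1 (k1 x).
  move=> x; rewrite -cE in_itv /= => /andP[h1 h2].
  apply: dK1; last by apply: tpos; lra.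
  lra.
have hK2 : forall x : R, x \in `](a + b) / 2, b[ -> is_derive x (1:R) K2 (k2 x).
  move=> x; rewrite -cE in_itv /= => /andP[h1 h2].
  apply: dK2; last by apply: tpos; lra.
  lra.
have cK1' : {within `[a, (a + b) / 2], continuous K1} by apply: continuous_subspaceT.
have cK2' : {within `[(a + b) / 2, b], continuous K2} by apply: continuous_subspaceT.
have b1 : forall x : R, x \in `]a, (a + b) / 2[ ->
    `|(x - (a + b) / 2) * derive1 f x| <= k1 x.
  move=> x; rewrite -cE in_itv /= => /andP[h1 h2].
  have hx : a <= x <= b by apply/andP; split; lra.
  apply: (le_trans (young x hx)).
  have e : `|x - c| = -1 * x + c by rewrite ler0_norm; [ring | rewrite subr_le0; lra].
  rewrite e /k1 !addrK w1E w2E beE le_eqVlt; apply/orP; left; apply/eqP.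
  by field; rewrite (lt0r_neq0 Q0) (lt0r_neq0 q0) (lt0r_neq0 L0) (lt0r_neq0 r10) (lt0r_neq0 pp0) (lt0r_neq0 P0) (lt0r_neq0 p0).
have b2 : forall x : R, x \in `](a + b) / 2, b[ ->
    `|(x - (a + b) / 2) * derive1 f x| <= k2 x.
  move=> x; rewrite -cE in_itv /= => /andP[h1 h2].
  have hx : a <= x <= b by apply/andP; split; lra.
  apply: (le_trans (young x hx)).
  have e : `|x - c| = 1 * x + - c by rewrite ger0_norm; [ring | rewrite subr_ge0; lra].
  rewrite e /k2 !addrK w1E w2E beE le_eqVlt; apply/orP; left; apply/eqP.
  by field; rewrite (lt0r_neq0 Q0) (lt0r_neq0 q0) (lt0r_neq0 L0) (lt0r_neq0 r10) (lt0r_neq0 pp0) (lt0r_neq0 P0) (lt0r_neq0 p0).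
have := @core R f (derive1 f) K1 K2 k1 k2 a b ab hfd cf hK1 cK1' hK2 cK2' b1 b2.
rewrite -cE.
have ea : -1 * a + c = L / 2 by rewrite cE LE; field.
have ec : -1 * c + c = 0 by ring.
have eb : 1 * b + - c = L / 2 by rewrite cE LE; field.
have ec2 : 1 * c + - c = 0 by ring.
have ta : - L^-1 * a + b / L = 1.
  by rewrite LE; field; rewrite -LE; exact: (lt0r_neq0 L0).
have tb : - L^-1 * b + b / L = 0 by field; exact: (lt0r_neq0 L0).
have Ksum : K1 c - K1 a + (K2 b - K2 c) = C.
  have pz : forall e : R, 0 < e -> pw e 0 = 0 by move=> e e0; rewrite pw_le0.
  rewrite /K1 /K2 /= ea ec eb ec2 ta tb !pz // !(@pw_ge0 _ (p + 1) _ (ltW L20)) (@pw_ge0 _ (alpha * s + 1) _ ler01) powR1.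
  rewrite powRD ?(lt0r_neq0 L20) ?implybT // powRr1 ?ltW //.
  have bE : b = L + a by rewrite LE; ring.
  rewrite w1E w2E beE PE QE ME bE.
  apply: (@eq_trans _ _ (C * (p^-1 + q^-1))); last by rewrite pq mulr1.
  have Nnz : A + m * alpha * s * B != 0.
    by move: Mpos; rewrite ME; apply: contra => /eqP ->; rewrite mul0r.
  field.
  by rewrite (lt0r_neq0 q0) (lt0r_neq0 p0) (lt0r_neq0 r10) Nnz (lt0r_neq0 L0)
    (lt0r_neq0 pp0) (lt0r_neq0 (powR_gt0 p L20)).
rewrite Ksum => /fin hfin; apply: (le_trans hfin).
rewrite -ME.
have invpow : forall x e : R, 0 <= x -> (x^-1) `^ e = (x `^ e)^-1.
  move=> x e x0.
  by rewrite -powR_inv1 // -powRrM mulrC powRrM powR_inv1 // powR_ge0.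
have eU : U = L / 2 * (L `^ p^-1 / (p + 1) `^ p^-1).
  rewrite UE PE powRM ?powR_ge0 // ?divr_ge0 ?ltW //.
  rewrite -powRrM mulfV ?(lt0r_neq0 p0) // powRr1 ?ltW //.
  by rewrite powRM ?invr_ge0 ?ltW // invpow // ltW.
have eV : V = L `^ q^-1 * M `^ q^-1 by rewrite VE QE powRM // ltW.
have eL : L `^ p^-1 * L `^ q^-1 = L.
  by rewrite -powRD ?pq ?powRr1 ?ltW // (lt0r_neq0 L0) implybT.
have p1p0 : 0 < (p + 1) `^ p^-1 by apply: powR_gt0.
rewrite CE eU eV.
rewrite le_eqVlt; apply/orP; left; apply/eqP.
have -> : L / 2 * (L `^ p^-1 / (p + 1) `^ p^-1) * (L `^ q^-1 * M `^ q^-1) / L =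
   L / 2 * (L `^ p^-1 * L `^ q^-1) * M `^ q^-1 / (p + 1) `^ p^-1 / L.
  by field; rewrite (lt0r_neq0 L0) (lt0r_neq0 p1p0).
rewrite eL.
by field; rewrite (lt0r_neq0 L0) (lt0r_neq0 p1p0).
Unshelve. all: by end_near.
Qed.
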